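(* Fix $n$, $\alpha$ and $\lambda\in\mathbb{C}$ with $D-\lambda I$ invertible, $\Delta_n(\lambda,\alpha)=0$ and $D_1\Delta_n(\lambda,\alpha)\ne0$. Let $p=(1,(D-\lambda I)^{-1}D\mathbf 1)$ and $$q=(q_*,\tilde q),\qquad q_*=\frac1{D_1\Delta_n(\lambda,\alpha)},\qquad \tilde q=\frac1{D_1\Delta_n(\lambda,\alpha)}(\lambda I-D^T)^{-1}\begin{pmatrix}L(\alpha)\ell_1\\\vdots\\L(\alpha)\ell_n\end{pmatrix}.$$ Then $A_n(\alpha)^Tq=\lambda q$, $q\cdot p=1$, and the spectral projection of $A_n(\alpha)$ onto the eigenspace of $\lambda$ is $(\zeta_0,\zeta)\mapsto D_1\Delta_n(\lambda,\alpha)^{-1}\big(\zeta_0+L(\alpha)P(\lambda I-D)^{-1}\zeta\big)p=(q\cdot(\zeta_0,\zeta))\,p$. If moreover $\alpha\mapsto L(\alpha)$ is differentiable, then $$q\cdot A_n'(\alpha)p=-D_1\Delta_n(\lambda,\alpha)^{-1}D_2\Delta_n(\lambda,\alpha).$$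
   Context: $X=C([-1,0],\mathbb{R})$; $L(\alpha):X\to\mathbb{R}$ is bounded linear, extended complex-linearly. A mesh $-1\le\theta_n<\dots<\theta_1<\theta_0=0$ is given, with Lagrange polynomials $\ell_j(\theta)=\prod_{0\le m\le n,\,m\neq j}\frac{\theta-\theta_m}{\theta_j-\theta_m}$, $j=0,\dots,n$. $D$ is the $n\times n$ matrix with entries $D_{ij}=\ell_j'(\theta_i)$, $i,j=1,\dots,n$; $\mathbf 1=(1,\dots,1)^T\in\mathbb{R}^n$; $I$ identity. For $y\in\mathbb{C}^n$, $Py=\sum_{j=1}^ny_j\ell_j$, $P_0(y_0,y)=y_0\ell_0+Py$. $A_n(\alpha)(y_0,y)=(L(\alpha)P_0(y_0,y),\,Dy-y_0D\mathbf 1)$ on $\mathbb{C}\times\mathbb{C}^n$, $A_n'$ its derivative in $\alpha$. $\pi_n(\lambda)=\ell_0+P(D-\lambda I)^{-1}D\mathbf 1$, $\Delta_n(\lambda,\alpha)=\lambda-L(\alpha)\pi_n(\lambda)$; $D_1,D_2$ are partial derivatives in $\lambda$ and $\alpha$. For $v,w\in\mathbb{C}^m$, $v\cdot w=\sum_iv_iw_i$. *)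

(* Defs.v *)
From HB Require Import structures.
From mathcomp Require Import all_boot all_order all_algebra.
From mathcomp Require Import complex.
From mathcomp Require Import all_classical all_reals all_analysis.
Import Order.TTheory GRing.Theory Num.Theory.
Import numFieldNormedType.Exports.

Set Implicit Arguments.
Unset Strict Implicit.
Unset Printing Implicit Defensive.

Local Open Scope ring_scope.
Local Open Scope classical_set_scope.
Local Open Scope complex_scope.

(** * The state space X = C([-1,0], R)
    Elements of X are represented by functions R -> R that are continuous on
    [-1,0]; only their values on [-1,0] matter (see [bounded_linear_X]). *)
Definition inX (R : realType) (f : R -> R) : Prop :=
  {within `[(-1)%R, 0%R], continuous f}.

Definition supnorm_le (R : realType) (f : R -> R) (c : R) : Prop :=
  forall t : R, -1 <= t <= 0 -> `|f t| <= c.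

(** A bounded linear functional on X = C([-1,0],R), given by its action
    on representatives (it must not depend on values outside [-1,0]). *)
Definition bounded_linear_X (R : realType) (Lam : (R -> R) -> R) : Prop :=
  [/\ (forall (a : R) (f g : R -> R), inX f -> inX g ->
          Lam (fun t => a * f t + g t) = a * Lam f + Lam g),
      (forall f g : R -> R, inX f -> inX g ->
          (forall t, -1 <= t <= 0 -> f t = g t) -> Lam f = Lam g)
    & (exists M : R, forall (f : R -> R) (c : R), inX f -> supnorm_le f c ->
          `|Lam f| <= M * c)].

Definition Lc (R : realType) (Lam : (R -> R) -> R) (u : R -> R[i]) : R[i] :=
  Lam (fun t => complex.Re (u t)) +i* Lam (fun t => complex.Im (u t)).

(** alpha |-> L(alpha) is differentiable (in the operator norm of X^* ). *)
Definition L_differentiable (R : realType) (L : R -> (R -> R) -> R) : Prop :=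
  exists L' : R -> (R -> R) -> R,
    (forall a, bounded_linear_X (L' a)) /\
    forall a : R, forall e : R, 0 < e -> exists d : R, 0 < d /\
      forall h : R, 0 < `|h| < d ->
        forall f : R -> R, inX f -> supnorm_le f 1 ->
          `|L (a + h) f - L a f - h * L' a f| <= e * `|h|.

Definition is_mesh (R : realType) (n : nat) (th : 'I_n.+1 -> R) : Prop :=
  [/\ th ord0 = 0,
      (forall i j : 'I_n.+1, (i < j)%N -> th j < th i)
    & -1 <= th ord_max].

Definition lagr (R : realType) (n : nat) (th : 'I_n.+1 -> R) (j : 'I_n.+1)
  : {poly R} :=
  \prod_(m < n.+1 | m != j) (('X - (th m)%:P) * ((th j - th m)^-1)%:P).

(** D_{ij} = l_j'(th_i), i,j = 1..n (index k : 'I_n stands for k+1). *)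
Definition Dmat (R : realType) (n : nat) (th : 'I_n.+1 -> R) : 'M[R[i]]_n :=
  \matrix_(i < n, j < n) ((lagr th (lift ord0 j))^`()).[th (lift ord0 i)]%:C.

Definition ones (R : realType) (n : nat) : 'cV[R[i]]_n := const_mx 1.

Definition Pn_fun (R : realType) (n : nat) (th : 'I_n.+1 -> R) (y : 'cV[R[i]]_n)
  : R -> R[i] :=
  fun t => \sum_(j < n) y j 0 * ((lagr th (lift ord0 j)).[t])%:C.

Definition P0fun (R : realType) (n : nat) (th : 'I_n.+1 -> R) (y0 : R[i])
  (y : 'cV[R[i]]_n) : R -> R[i] :=
  fun t => y0 * ((lagr th ord0).[t])%:C + Pn_fun th y t.

(** Elements of C x C^n are column vectors of size 1 + n:
    the first entry is y_0, the remaining block is y. *)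
Definition top (R : realType) (n : nat) (v : 'cV[R[i]]_(1 + n)) : R[i] :=
  usubmx v 0 0.
Definition bot (R : realType) (n : nat) (v : 'cV[R[i]]_(1 + n)) : 'cV[R[i]]_n :=
  dsubmx v.
Definition pairv (R : realType) (n : nat) (y0 : R[i]) (y : 'cV[R[i]]_n)
  : 'cV[R[i]]_(1 + n) := col_mx (y0%:M) y.

Definition An_map (R : realType) (n : nat) (th : 'I_n.+1 -> R)
  (Lam : (R -> R) -> R) (v : 'cV[R[i]]_(1 + n)) : 'cV[R[i]]_(1 + n) :=
  pairv (Lc Lam (P0fun th (top v) (bot v)))
        (Dmat th *m bot v - top v *: (Dmat th *m @ones R n)).

Definition An (R : realType) (n : nat) (th : 'I_n.+1 -> R)
  (Lam : (R -> R) -> R) : 'M[R[i]]_(1 + n) :=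
  \matrix_(i, j) (An_map th Lam (delta_mx j 0)) i 0.

Definition pin (R : realType) (n : nat) (th : 'I_n.+1 -> R) (z : R[i])
  : R -> R[i] :=
  fun t => ((lagr th ord0).[t])%:C
           + Pn_fun th (invmx (Dmat th - z%:M) *m (Dmat th *m @ones R n)) t.

Definition Deltan (R : realType) (n : nat) (th : 'I_n.+1 -> R)
  (Lam : (R -> R) -> R) (z : R[i]) : R[i] :=
  z - Lc Lam (pin th z).

(** v . w = sum_i v_i w_i (bilinear, no conjugation) *)
Definition dotv (K : pzRingType) (m : nat) (v w : 'cV[K]_m) : K :=
  \sum_(i < m) v i 0 * w i 0.

Definition has_derivC (R : realType) (F : R[i] -> R[i]) (z d : R[i]) : Prop :=
  is_derive (z : R[i]^o) (1 : R[i]^o) (F : R[i]^o -> R[i]^o) (d : R[i]^o).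

Definition has_derivRC (R : realType) (F : R -> R[i]) (a : R) (d : R[i]) : Prop :=
  (fun h : R => ((F (a + h) - F a) / h%:C : R[i]^o)) @ (0 : R)^' --> (d : R[i]^o).

Definition has_derivM (R : realType) (m : nat) (F : R -> 'M[R[i]]_m) (a : R)
  (D' : 'M[R[i]]_m) : Prop :=
  forall i j, has_derivRC (fun b => F b i j) a (D' i j).

(** Spectral (Riesz) projection of a square matrix A onto the generalized
    eigenspace of lam: the linear projection Pi onto ker (A - lam)^m along
    ran (A - lam)^m, m the size of A. *)
Definition shiftpow (K : pzRingType) (m : nat) (A : 'M[K]_m) (lam : K)
  (v : 'cV[K]_m) : 'cV[K]_m :=
  iter m (fun u => A *m u - lam *: u) v.

Definition is_spectral_projection (K : pzRingType) (m : nat) (A : 'M[K]_m)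
  (lam : K) (Pi : 'cV[K]_m -> 'cV[K]_m) : Prop :=
  [/\ (forall (a : K) (u v : 'cV[K]_m), Pi (a *: u + v) = a *: Pi u + Pi v),
      (forall v, Pi (Pi v) = Pi v),
      (forall v, (exists u, v = Pi u) <-> shiftpow A lam v = 0)
    & (forall v, Pi v = 0 <-> exists w, v = shiftpow A lam w)].

(* Main.v *)
Require Import Defs.
From HB Require Import structures.
From mathcomp Require Import all_boot all_order all_algebra.
From mathcomp Require Import complex.
From mathcomp Require Import all_classical all_reals all_analysis.
From mathcomp Require Import ring.
Import Order.TTheory GRing.Theory Num.Theory.
Import numFieldNormedType.Exports.
Local Open Scope ring_scope.
Local Open Scope complex_scope.

Lemma Re_sum {R : realType} (I : Type) (r : seq I) (P : pred I) (E : I -> R[i]) :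
  complex.Re (\sum_(i <- r | P i) E i) = \sum_(i <- r | P i) complex.Re (E i).
Proof.
apply: (big_ind2 (fun x y => complex.Re x = y)) => //.
by move=> [a b] y [c d] y' <- <-.
Qed.
Lemma Im_sum {R : realType} (I : Type) (r : seq I) (P : pred I) (E : I -> R[i]) :
  complex.Im (\sum_(i <- r | P i) E i) = \sum_(i <- r | P i) complex.Im (E i).
Proof.
apply: (big_ind2 (fun x y => complex.Im x = y)) => //.
by move=> [a b] y [c d] y' <- <-.
Qed.
Lemma Re_mulC {R : realType} (z : R[i]) (r : R) : complex.Re (z * r%:C) = complex.Re z * r.
Proof. by case: z => a b /=; rewrite mulr0 subr0. Qed.
Lemma Im_mulC {R : realType} (z : R[i]) (r : R) : complex.Im (z * r%:C) = complex.Im z * r.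
Proof. by case: z => a b /=; rewrite mulr0 add0r. Qed.

Lemma inX_horner {R : realType} (p : {poly R}) : inX (fun t => p.[t]).
Proof. exact/continuous_subspaceT/continuous_horner. Qed.

Lemma Lp_lin {R : realType} {Lam : (R -> R) -> R} : bounded_linear_X Lam ->
  forall (a : R) (p q : {poly R}),
  Lam (fun t => (a *: p + q).[t]) = a * Lam (fun t => p.[t]) + Lam (fun t => q.[t]).
Proof.
case=> H _ _ a p q; rewrite -H; try exact: inX_horner.
by congr Lam; apply/funext => t; rewrite hornerD hornerZ.
Qed.

Lemma Lp0 {R : realType} {Lam : (R -> R) -> R} : bounded_linear_X Lam ->
  Lam (fun t => (0 : {poly R}).[t]) = 0.
Proof.
move=> H; have := Lp_lin H 1 0 0.
by rewrite addr0 mul1r scaler0 => /eqP; rewrite -subr_eq subrr => /eqP <-.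
Qed.

Lemma Lp_sum {R : realType} {Lam : (R -> R) -> R} : bounded_linear_X Lam ->
  forall (I : Type) (r : seq I) (a : I -> R) (F : I -> {poly R}),
  Lam (fun t => (\sum_(i <- r) a i *: F i).[t]) = \sum_(i <- r) a i * Lam (fun t => (F i).[t]).
Proof.
move=> H I r a F; elim: r => [|x r IH]; first by rewrite !big_nil Lp0.
by rewrite !big_cons Lp_lin // IH.
Qed.

Lemma Lc_sum {R : realType} {Lam : (R -> R) -> R} : bounded_linear_X Lam ->
  forall (m : nat) (z : 'I_m -> R[i]) (F : 'I_m -> {poly R}),
  Lc Lam (fun t => \sum_(k < m) z k * ((F k).[t])%:C) =
  \sum_(k < m) z k * (Lam (fun t => (F k).[t]))%:C.
Proof.
move=> H m z F; rewrite /Lc.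
have -> : (fun t => complex.Re (\sum_(k < m) z k * ((F k).[t])%:C)) =
   (fun t => (\sum_(k < m) complex.Re (z k) *: F k).[t]).
  apply/funext => t; rewrite Re_sum horner_sum; apply: eq_bigr => k _.
  by rewrite Re_mulC hornerZ.
have -> : (fun t => complex.Im (\sum_(k < m) z k * ((F k).[t])%:C)) =
   (fun t => (\sum_(k < m) complex.Im (z k) *: F k).[t]).
  apply/funext => t; rewrite Im_sum horner_sum; apply: eq_bigr => k _.
  by rewrite Im_mulC hornerZ.
rewrite !Lp_sum //.
apply/eqP; rewrite eq_complex /= Re_sum Im_sum.
by apply/andP; split; apply/eqP; apply: eq_bigr => k _; rewrite ?Re_mulC ?Im_mulC.
Qed.

Definition cL {R : realType} {n : nat} (th : 'I_n.+1 -> R) (Lam : (R -> R) -> R)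
  (j : 'I_n.+1) : R[i] := (Lam (fun t => (lagr th j).[t]))%:C.
Definition crow {R : realType} {n : nat} (th : 'I_n.+1 -> R) (Lam : (R -> R) -> R)
  : 'rV[R[i]]_n := \row_j cL th Lam (lift ord0 j).
Definition Amat {R : realType} {n : nat} (th : 'I_n.+1 -> R) (Lam : (R -> R) -> R)
  : 'M[R[i]]_(1 + n) :=
  block_mx ((cL th Lam ord0)%:M) (crow th Lam) (- (Dmat th *m @ones R n)) (Dmat th).

Lemma Lc_Pn {R : realType} {Lam : (R -> R) -> R} : bounded_linear_X Lam ->
  forall n (th : 'I_n.+1 -> R) (y : 'cV[R[i]]_n),
  Lc Lam (Pn_fun th y) = (crow th Lam *m y) 0 0.
Proof.
move=> H n th y; rewrite /Pn_fun Lc_sum // mxE; apply: eq_bigr => j _.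
by rewrite mxE mulrC.
Qed.

Lemma Lc_P0 {R : realType} {Lam : (R -> R) -> R} : bounded_linear_X Lam ->
  forall n (th : 'I_n.+1 -> R) (y0 : R[i]) (y : 'cV[R[i]]_n),
  Lc Lam (P0fun th y0 y) = y0 * cL th Lam ord0 + (crow th Lam *m y) 0 0.
Proof.
move=> H n th y0 y.
pose z (k : 'I_n.+1) := match unlift ord0 k with Some j => y j 0 | None => y0 end.
have -> : P0fun th y0 y = fun t => \sum_(k < n.+1) z k * ((lagr th k).[t])%:C.
  apply/funext => t; rewrite big_ord_recl /z unlift_none; congr (_ + _).
  by apply: eq_bigr => j _; rewrite liftK.
rewrite Lc_sum // big_ord_recl /z unlift_none mxE; congr (_ + _).
by apply: eq_bigr => j _; rewrite liftK mxE mulrC.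
Qed.

Lemma An_mapE {R : realType} {Lam : (R -> R) -> R} : bounded_linear_X Lam ->
  forall n (th : 'I_n.+1 -> R) (v : 'cV[R[i]]_(1 + n)),
  An_map th Lam v = Amat th Lam *m v.
Proof.
move=> H n th v.
rewrite /An_map /Amat. rewrite -[in RHS](vsubmxK v) mul_block_col /pairv Lc_P0 //.
have Eu : usubmx v = (top v)%:M by rewrite /top; apply: mx11_scalar.
rewrite Eu /bot; congr col_mx.
  rewrite raddfD /= mulrC scalar_mxM; congr (_ + _); apply/esym/mx11_scalar.
by rewrite mul_mx_scalar scalerN addrC.
Qed.

Lemma An_E {R : realType} {Lam : (R -> R) -> R} : bounded_linear_X Lam ->
  forall n (th : 'I_n.+1 -> R), An th Lam = Amat th Lam.
Proof.
move=> H n th; apply/matrixP => i j; rewrite mxE An_mapE // -colE.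
by rewrite mxE.
Qed.

Lemma invmxN (K : fieldType) (m : nat) (A : 'M[K]_m) : A \in unitmx -> invmx (- A) = - invmx A.
Proof.
move=> HA; rewrite -scaleN1r invmxZ; first by rewrite invrN1 scaleN1r.
by rewrite unitmxZ // unitrN1.
Qed.

Lemma mx11_eq (K : pzRingType) (A B : 'M[K]_1) : A 0 0 = B 0 0 -> A = B.
Proof. by move=> h; rewrite [A]mx11_scalar [B]mx11_scalar h. Qed.

Lemma dotvE (K : comPzRingType) (m : nat) (u v : 'cV[K]_m) : dotv u v = (u^T *m v) 0 0.
Proof. by rewrite mxE; apply: eq_bigr => i _; rewrite mxE. Qed.

Lemma shift_eq (K : fieldType) (m : nat) (D : 'M[K]_m) (lam : K) (x : 'cV[K]_m) :
  D *m x - lam *: x = (D - lam%:M) *m x.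
Proof. by rewrite mulmxBl mul_scalar_mx. Qed.

Section Alg.
Variables (R : realType) (n : nat) (D : 'M[R[i]]_n) (b : 'cV[R[i]]_n) (c : 'rV[R[i]]_n)
  (c0 lam d1 : R[i]).
Hypothesis HU : D - lam%:M \in unitmx.
Let M := invmx (D - lam%:M).
Hypothesis Hlam : lam = c0 + (c *m (M *m b)) 0 0.
Hypothesis Hd1 : d1 = 1 - (c *m (M *m (M *m b))) 0 0.
Hypothesis Hd : d1 != 0.
Let A : 'M[R[i]]_(1 + n) := block_mx c0%:M c (-b) D.
Let p : 'cV[R[i]]_(1 + n) := pairv 1 (M *m b).
Let q : 'cV[R[i]]_(1 + n) :=
  pairv (d1^-1) (d1^-1 *: (invmx (lam%:M - D^T) *m c^T)).

Lemma NT : (invmx (lam%:M - D^T))^T = - M.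
Proof.
rewrite trmx_inv linearB /= tr_scalar_mx trmxK -opprB invmxN //.
Qed.

Lemma NM : invmx (lam%:M - D) = - M.
Proof. by rewrite -opprB invmxN. Qed.

Lemma Ap : A *m p = lam *: p.
Proof.
rewrite /A /p /pairv mul_block_col scale_col_mx; congr col_mx.
  by rewrite mulmx1 [c *m _]mx11_scalar -raddfD /= scalemx1 -Hlam.
rewrite mul_mx_scalar scale1r.
have E : D *m (M *m b) - lam *: (M *m b) = b.
  by rewrite shift_eq mulmxA mulmxV // mul1mx.
by rewrite -[X in - X]E opprB subrK.
Qed.

Lemma tr11 (B : 'M[R[i]]_1) : B^T = B.
Proof. by apply/matrixP => i j; rewrite !ord1 mxE. Qed.

Lemma HUT : lam%:M - D^T \in unitmx.
Proof.
rewrite -unitmx_tr linearB /= tr_scalar_mx trmxK -opprB -scaleN1r unitmxZ //.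
exact: unitrN1.
Qed.

Lemma qA : A^T *m q = lam *: q.
Proof.
rewrite /A /q /pairv tr_block_mx mul_block_col scale_col_mx; congr col_mx.
  have E : (-b)^T *m (invmx (lam%:M - D^T) *m c^T) = c *m (M *m b).
    rewrite -[invmx _]trmxK NT -trmx_mul -trmx_mul tr11.
    by rewrite !mulmxN !mulNmx opprK mulmxA.
  rewrite tr_scalar_mx mul_scalar_mx -scalemxAr E [c *m _]mx11_scalar.
  rewrite !scale_scalar_mx -raddfD /=; congr (_%:M).
  by rewrite Hlam mulrDl [d1^-1 * _]mulrC.
set Y := invmx (lam%:M - D^T) *m c^T.
have E2 : lam *: Y - D^T *m Y = c^T.
  by rewrite -mul_scalar_mx -mulmxBl /Y mulmxA mulmxV ?HUT // mul1mx.
rewrite mul_mx_scalar -scalemxAr -E2 -scalerDr subrK scalerA mulrC -scalerA //.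
Qed.

Lemma qp : dotv q p = 1.
Proof.
rewrite dotvE /q /p /pairv tr_col_mx mul_row_col linearZ /= trmx_mul trmxK NT.
rewrite tr_scalar_mx mulmx1 -scalemxAl mulmxN mulNmx -mulmxA [c *m _]mx11_scalar.
rewrite scalerN scale_scalar_mx -raddfN -raddfD /= mxE mulr1n -mulrN -{1}[d1^-1]mulr1.
by rewrite -mulrDr -Hd1 mulVf.
Qed.

Lemma qv (v : 'cV[R[i]]_(1 + n)) :
  d1^-1 * (top v + (c *m (invmx (lam%:M - D) *m bot v)) 0 0) = dotv q v.
Proof.
rewrite dotvE /q /pairv -[in RHS](vsubmxK v) tr_col_mx mul_row_col linearZ /=.
rewrite trmx_mul trmxK NT NM tr_scalar_mx mul_scalar_mx -scalemxAl.
rewrite [RHS]mxE [X in _ = X + _]mxE [X in _ = _ + X]mxE.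
by rewrite /top /bot mulrDr mulmxA.
Qed.

Lemma dotv_lin (m : nat) (x u v : 'cV[R[i]]_m) (a : R[i]) :
  dotv x (a *: u + v) = a * dotv x u + dotv x v.
Proof. by rewrite !dotvE mulmxDr -scalemxAr !mxE. Qed.

Lemma fA (w : 'cV[R[i]]_(1 + n)) : A *m w - lam *: w =
  col_mx (c0%:M *m usubmx w + c *m dsubmx w - lam *: usubmx w)
         (-b *m usubmx w + D *m dsubmx w - lam *: dsubmx w).
Proof.
rewrite -[w]vsubmxK col_mxKu col_mxKd /A mul_block_col scale_col_mx opp_col_mx.
by rewrite add_col_mx.
Qed.

Lemma fp : A *m p - lam *: p = 0.
Proof. by rewrite Ap subrr. Qed.

Lemma qf (w : 'cV[R[i]]_(1 + n)) : dotv q (A *m w - lam *: w) = 0.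
Proof.
rewrite !dotvE mulmxBr mulmxA -[q^T *m A]trmxK trmx_mul trmxK qA -scalemxAr.
by rewrite linearZ /= scalemxAl subrr mxE.
Qed.

Lemma kerA (w : 'cV[R[i]]_(1 + n)) : A *m w - lam *: w = 0 -> w = top w *: p.
Proof.
have Eu : usubmx w = (top w)%:M by exact: mx11_scalar.
rewrite fA -(col_mx0 _ 1 n 1) => /eq_col_mx [_ H].
rewrite Eu mul_mx_scalar scalerN in H.
have Ed : dsubmx w = top w *: (M *m b).
  have : (D - lam%:M) *m dsubmx w = top w *: b.
    rewrite -shift_eq; apply/eqP; rewrite -subr_eq0.
    apply/eqP; rewrite -H.
    by rewrite [LHS]addrC addrA.
  move=> /(congr1 (mulmx M)); rewrite mulmxA mulVmx // mul1mx => ->.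
  by rewrite scalemxAr.
rewrite -[LHS](vsubmxK w) Ed Eu /p /pairv scale_col_mx scalemx1.
by [].
Qed.

Let f (w : 'cV[R[i]]_(1 + n)) := A *m w - lam *: w.

Lemma flin (a : R[i]) (x y : 'cV[R[i]]_(1 + n)) : f (a *: x + y) = a *: f x + f y.
Proof.
rewrite /f mulmxDr -scalemxAr scalerDr [lam *: (a *: x)]scalerA [lam * a]mulrC -scalerA scalerBr opprD.
by rewrite addrACA.
Qed.

Lemma f0 : f 0 = 0.
Proof. by rewrite /f mulmx0 scaler0 subrr. Qed.

Lemma fZ (a : R[i]) (x : 'cV[R[i]]_(1 + n)) : f (a *: x) = a *: f x.
Proof. by rewrite -[a *: x]addr0 flin f0 addr0. Qed.

Lemma iter0 k : iter k f 0 = 0.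
Proof. by elim: k => //= k ->; rewrite f0. Qed.

Lemma iterlin k (a : R[i]) (x y : 'cV[R[i]]_(1 + n)) :
  iter k f (a *: x + y) = a *: iter k f x + iter k f y.
Proof. by elim: k => //= k ->; rewrite flin. Qed.

Lemma iterp k : iter k.+1 f p = 0.
Proof. by rewrite iterSr /f fp iter0. Qed.

Lemma dotvZ (m : nat) (x u : 'cV[R[i]]_m) (a : R[i]) : dotv x (a *: u) = a * dotv x u.
Proof. by rewrite !dotvE -scalemxAr mxE. Qed.

Lemma dotv0 (m : nat) (x : 'cV[R[i]]_m) : dotv x 0 = 0.
Proof. by rewrite -(scale0r (0 : 'cV[R[i]]_m)) dotvZ mul0r. Qed.

Lemma pre (v : 'cV[R[i]]_(1 + n)) : dotv q v = 0 ->
  exists u, dotv q u = 0 /\ f u = v.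
Proof.
move=> Hv.
pose u0 : 'cV[R[i]]_(1 + n) := col_mx 0 (M *m dsubmx v).
have Hu0 : f u0 = v.
  rewrite /f fA /u0 col_mxKu col_mxKd !mulmx0 scaler0 !add0r subr0.
  rewrite shift_eq [(D - _) *m _]mulmxA mulmxV // mul1mx.
  rewrite -[RHS](vsubmxK v); congr col_mx.
  rewrite [usubmx v]mx11_scalar [c *m _]mx11_scalar; congr (_%:M).
  move: Hv; rewrite -qv NM => /eqP; rewrite mulf_eq0 invr_eq0 (negbTE Hd) /=.
  rewrite mulNmx mulmxN mxE addrC addrC subr_eq0 => /eqP <-.  by [].
exists ((- dotv q u0) *: p + u0); split.
  by rewrite dotv_lin qp mulr1 addNr.
by rewrite flin Hu0 /f fp scaler0 add0r.
Qed.

Lemma kerk k (w : 'cV[R[i]]_(1 + n)) : dotv q w = 0 -> iter k f w = 0 -> w = 0.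
Proof.
elim: k w => [|k IH] w Hq; first by [].
rewrite iterSr => /IH Hfw.
have Hf : f w = 0 by apply: Hfw; rewrite /f qf.
have Hw : w = top w *: p by apply: kerA; exact: Hf.
move: Hq; rewrite Hw dotvZ qp mulr1 => Ht.
by rewrite Ht scale0r.
Qed.

Lemma prek k (v : 'cV[R[i]]_(1 + n)) : dotv q v = 0 ->
  exists u, dotv q u = 0 /\ v = iter k f u.
Proof.
elim: k v => [|k IH] v Hv; first by exists v.
have [u1 [Hu1 ->]] := IH v Hv.
have [u [Hu <-]] := pre u1 Hu1.
by exists u; split => //; rewrite iterSr.
Qed.

Lemma iterp1 : iter (1 + n) f p = 0.
Proof. exact: iterp. Qed.
Lemma iter1S x : iter (1 + n) f x = f (iter n f x).
Proof. exact: iterS. Qed.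

Lemma specA : is_spectral_projection A lam (fun v => dotv q v *: p).
Proof.
have shE : forall v, shiftpow A lam v = iter (1 + n) f v by [].
split.
- by move=> a u v; rewrite dotv_lin scalerDl scalerA.
- by move=> v; rewrite dotvZ qp mulr1.
- move=> v; rewrite shE; split.
    by move=> [u ->]; rewrite -[_ *: p]addr0 iterlin iterp1 iter0 scaler0 addr0.
  move=> H; exists v.
  have Hw : dotv q ((- dotv q v) *: p + v) = 0.
    by rewrite dotv_lin qp mulr1 addNr.
  have := kerk (1 + n) _ Hw.
  rewrite iterlin iterp1 scaler0 add0r H => /(_ erefl) /eqP.
  by rewrite scaleNr addrC addr_eq0 opprK => /eqP.
- move=> v; split.
    move=> H.
    have Hv : dotv q v = 0.
      by have := congr1 (dotv q) H; rewrite dotvZ qp mulr1 dotv0.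
    by have [u [_ Hu]] := prek (1 + n) v Hv; exists u; rewrite shE.
  by move=> [w ->]; rewrite shE iter1S /f qf scale0r.
Qed.

Lemma alg_main : [/\ A^T *m q = lam *: q, dotv q p = 1,
  is_spectral_projection A lam
    (fun v => (d1^-1 * (top v + (c *m (invmx (lam%:M - D) *m bot v)) 0 0)) *: p)
  & forall v, (d1^-1 * (top v + (c *m (invmx (lam%:M - D) *m bot v)) 0 0)) *: p
       = dotv q v *: p].
Proof.
split; [exact: qA | exact: qp | | by move=> v; rewrite qv].
rewrite (_ : (fun v => _) = (fun v => dotv q v *: p)); first exact: specA.
by apply/funext => v; rewrite qv.
Qed.

End Alg.

Section AnaHelp.
Local Open Scope classical_set_scope.
Lemma horner_cvg {R : realType} (p : {poly R[i]}) (z : R[i]^o) :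
  (fun x : R[i]^o => (p.[x] : R[i]^o)) @ z --> (p.[z] : R[i]^o).
Proof.
elim/poly_ind: p => [|p a IH].
  have -> : (fun x : R[i]^o => ((0 : {poly R[i]}).[x] : R[i]^o)) = (fun _ => 0).
    by apply/funext => x; rewrite horner0.
  rewrite horner0. apply: cvg_cst. exact: nbhs_filter.
have -> : (fun x : R[i]^o => ((p * 'X + a%:P).[x] : R[i]^o)) =
   (fun x : R[i]^o => (p.[x] * x : R[i]^o)) + (fun _ => (a : R[i]^o)).
  by apply/funext => x; rewrite hornerMXaddC.
rewrite hornerMXaddC; apply: cvgD; last by apply: cvg_cst; exact: nbhs_filter.
all: try exact: nbhs_filter. exact (@cvgM _ _ _ (nbhs_filter z) _ _ _ _ IH cvg_id).
Qed.
Lemma mxEB {K : zmodType} (m k : nat) (A B : 'M[K]_(m, k)) i j :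
  (A - B) i j = A i j - B i j.
Proof. by rewrite !mxE. Qed.

Lemma map_polyC_eval {R : realType} (m k : nat) (A : 'M[R[i]]_(m, k)) (h : R[i]) :
  map_mx (horner_eval h) (map_mx polyC A) = A.
Proof. by apply/matrixP => i j; rewrite !mxE /= horner_evalE hornerC. Qed.

Lemma deriv_resolvent {R : realType} (n : nat) (D : 'M[R[i]]_n) (b : 'cV[R[i]]_n)
  (c : 'rV[R[i]]_n) (c0 lam d1 : R[i]) (F : R[i] -> R[i]) :
  D - lam%:M \in unitmx ->
  (forall z, F z = z - (c0 + (c *m (invmx (D - z%:M) *m b)) 0 0)) ->
  is_derive (lam : R[i]^o) (1 : R[i]^o) (F : R[i]^o -> R[i]^o) (d1 : R[i]^o) ->
  d1 = 1 - (c *m (invmx (D - lam%:M) *m (invmx (D - lam%:M) *m b))) 0 0.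
Proof.
move=> HU HF Hd.
set M := invmx (D - lam%:M).
set w := M *m b.
pose Dp : 'M[{poly R[i]}]_n := map_mx polyC (D - lam%:M) - ('X)%:M.
pose P := \det Dp.
pose Q := ((map_mx polyC c) *m \adj Dp *m map_mx polyC w) 0 0.
have EvD : forall h, map_mx (horner_eval h) Dp = D - (h + lam)%:M.
  move=> h; rewrite /Dp map_mxB map_scalar_mx map_polyC_eval /= horner_evalE hornerX.
  by rewrite raddfD /= opprD addrA addrAC.
have EvP : forall h, P.[h] = \det (D - (h + lam)%:M).
  by move=> h; rewrite -EvD det_map_mx /= horner_evalE.
have EvQ : forall h, Q.[h] = (c *m \adj (D - (h + lam)%:M) *m w) 0 0.
  move=> h.
  transitivity ((map_mx (horner_eval h) ((map_mx polyC c) *m \adj Dp *m map_mx polyC w)) 0 0).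
    by rewrite mxE horner_evalE.
  by rewrite !map_mxM map_mx_adj EvD !map_polyC_eval.
have unitE : forall h, (D - (h + lam)%:M \in unitmx) = (P.[h] != 0).
  by move=> h; rewrite unitmxE unitfE EvP.
have invE : forall h, P.[h] != 0 ->
    (c *m (invmx (D - (h + lam)%:M) *m w)) 0 0 = Q.[h] / P.[h].
  move=> h hP; have U : D - (h + lam)%:M \in unitmx by rewrite unitE.
  rewrite EvQ EvP /invmx U -scalemxAl -scalemxAr mxE mulrC.
  by rewrite mulmxA.
have resolv : forall h, P.[h] != 0 ->
    invmx (D - (h + lam)%:M) - M = h *: (invmx (D - (h + lam)%:M) *m M).
  move=> h hP.
  have U : D - (h + lam)%:M \in unitmx by rewrite unitE.
  have E1 : invmx (D - (h + lam)%:M) *m (D - lam%:M) *m M = invmx (D - (h + lam)%:M).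
    by rewrite -mulmxA mulmxV // mulmx1.
  have E2 : invmx (D - (h + lam)%:M) *m (D - (h + lam)%:M) *m M = M.
    by rewrite mulVmx // mul1mx.
  rewrite -{1}E1 -{2}E2 -mulmxBl -mulmxBr.
  have -> : D - lam%:M - (D - (h + lam)%:M) = h%:M.
    by rewrite opprB addrC addrA subrK raddfD /= addrK.
  by rewrite mul_mx_scalar -scalemxAl.
have gE : forall h : R[i], h != 0 -> P.[h] != 0 ->
   (h^-1 *: ((F \o shift lam) (h *: (1 : R[i]^o)) - F lam) : R[i]^o) = 1 - Q.[h] / P.[h].
  move=> h h0 hP /=.
  have Xd : (c *m (invmx (D - (h + lam)%:M) *m b)) 0 0 - (c *m (M *m b)) 0 0
      = h * (Q.[h] / P.[h]).
    transitivity ((c *m ((invmx (D - (h + lam)%:M) - M) *m b)) 0 0).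
      by rewrite mulmxBl mulmxBr mxEB.
    by rewrite resolv // -scalemxAl -scalemxAr mxE -mulmxA invE.
  have -> : h%:A = h by rewrite -[h%:A]/(h * 1) mulr1.
  rewrite -[LHS]/(h^-1 * _) !HF.
  have -> : h + lam - (c0 + (c *m (invmx (D - (h + lam)%:M) *m b)) 0 0) -
      (lam - (c0 + (c *m (invmx (D - lam%:M) *m b)) 0 0)) = h * (1 - Q.[h] / P.[h]).
    have E : forall (h' l c0' X Y : R[i]), h' + l - (c0' + X) - (l - (c0' + Y)) = h' - (X - Y).
      by move=> *; ring.
    by rewrite E Xd mulrBr mulr1.
  by rewrite mulKf.
have HP0 : P.[0] != 0 by rewrite -unitE add0r.
have phi0 : (c *m (invmx (D - lam%:M) *m w)) 0 0 = Q.[0] / P.[0].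
  by have := invE 0 HP0; rewrite add0r.
have Hphi : (fun h : R[i]^o => (Q.[h] / P.[h] : R[i]^o)) @ (0:R[i]^o) --> (Q.[0]/P.[0] : R[i]^o).
  exact (cvgM (horner_cvg Q 0) (cvgV HP0 (horner_cvg P 0))).
have hP : \forall h \near (0:R[i]^o), P.[h] != 0.
  have Hpos : 0 < `|P.[0]| by rewrite normr_gt0.
  have /cvgr_dist_lt /(_ _ Hpos) := horner_cvg P 0.
  apply: filterS => h Hh; apply/eqP => E; move: Hh; rewrite E subr0 ltxx.
  by [].
pose g := fun h : R[i] => (h^-1 *: ((F \o shift lam) (h *: (1 : R[i]^o)) - F lam) : R[i]^o).
have Hev : {near (0:R[i]^o)^', (fun h : R[i]^o => (1 - Q.[h]/P.[h] : R[i]^o)) =1 g}.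
  have H2 : \forall h \near (0:R[i]^o)^', P.[h] != 0 by exact: cvg_within.
  have H1 := nbhs_dnbhs_neq (0 : R[i]^o).
  apply: filter_app H2; apply: filter_app H1; apply: filterE => h h0 hP'.
  by rewrite /g gE.
have Hg : g @ (0:R[i]^o)^' --> (1 - Q.[0]/P.[0] : R[i]^o).
  apply: cvg_trans (near_eq_cvg Hev) _.
  apply: cvgB; first exact: cvg_cst.
  exact: cvg_within_filter.
rewrite phi0; case: Hd => _ <-.
rewrite /derive. exact (cvg_lim (@norm_hausdorff _ _) Hg).
Qed.

Lemma derivRC_uniq {R : realType} {F : R -> R[i]} {a d d'} :
  has_derivRC F a d -> has_derivRC F a d' -> d = d'.
Proof.
move=> H1 H2.
have E1 := cvg_lim (@norm_hausdorff _ _) H1.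
have E2 := cvg_lim (@norm_hausdorff _ _) H2.
by rewrite -E1 -E2.
Qed.

Lemma derivRC_ext {R : realType} (F G : R -> R[i]) a d :
  (forall x, F x = G x) -> has_derivRC F a d -> has_derivRC G a d.
Proof. by move=> E; rewrite /has_derivRC (_ : F = G) //; apply/funext. Qed.

Lemma derivRC_cst {R : realType} (F : R -> R[i]) a d :
  (forall x, F x = F a) -> has_derivRC F a d -> d = 0.
Proof.
move=> E H; apply: (derivRC_uniq H).
rewrite /has_derivRC.
have -> : (fun h : R => ((F (a + h) - F a) / h%:C : R[i]^o)) = (fun _ => (0 : R[i]^o)).
  by apply/funext => h; rewrite E subrr mul0r.
exact: cvg_cst.
Qed.

Lemma derivRC_opp {R : realType} (F : R -> R[i]) (l : R[i]) a d :
  has_derivRC F a d -> has_derivRC (fun x => l - F x) a (- d).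
Proof.
move=> H; rewrite /has_derivRC.
have -> : (fun h : R => ((l - F (a + h) - (l - F a)) / h%:C : R[i]^o)) =
    (fun h : R => - ((F (a + h) - F a) / h%:C : R[i]^o)).
  by apply/funext => h /=; rewrite -mulNr; congr (_ * _); ring.
exact (cvgN H).
Qed.

Lemma derivRC_sum {R : realType} {I : Type} (r : seq I) (w : I -> R[i])
  (G : I -> R -> R[i]) a (d : I -> R[i]) :
  (forall i, has_derivRC (G i) a (d i)) ->
  has_derivRC (fun x => \sum_(i <- r) G i x * w i) a (\sum_(i <- r) d i * w i).
Proof.
move=> H; elim: r => [|i r IH]; rewrite /has_derivRC.
  set f := (fun h : R => _).
  have -> : f = (fun _ => (0 : R[i]^o)).
    by apply/funext => h; rewrite /f !big_nil subrr mul0r.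
  rewrite big_nil; exact: cvg_cst.
set f := (fun h : R => _).
have -> : f = (fun h : R =>
    (((G i (a + h) - G i a) / h%:C) * w i +
    (\sum_(j <- r) G j (a + h) * w j - \sum_(j <- r) G j a * w j) / h%:C : R[i]^o)).
  apply/funext => h; rewrite /f /= !big_cons.
  ring.
rewrite big_cons.
exact (cvgD (cvgM (H i) (@cvg_cst _ (w i : R[i]^o) _ _ _)) IH).
Qed.

End AnaHelp.

Lemma mxED {K : nmodType} (m k : nat) (A B : 'M[K]_(m, k)) i j :
  (A + B) i j = A i j + B i j.
Proof. by rewrite !mxE. Qed.

Lemma DeltaE {R : realType} {Lm : (R -> R) -> R} : bounded_linear_X Lm ->
  forall n (th : 'I_n.+1 -> R) (z : R[i]), Deltan th Lm z =
  z - (cL th Lm ord0 + (crow th Lm *m (invmx (Dmat th - z%:M) *m (Dmat th *m ones R n))) 0 0).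
Proof.
move=> HLm n th z; rewrite /Deltan; congr (_ - _).
have -> : pin th z = P0fun th 1 (invmx (Dmat th - z%:M) *m (Dmat th *m ones R n)).
  by apply/funext => t; rewrite /pin /P0fun mul1r.
by rewrite Lc_P0 // mul1r.
Qed.

Lemma top_row {R : realType} {n : nat} (c0 : R[i]) (c : 'rV[R[i]]_n) (b : 'cV[R[i]]_n)
  (D : 'M[R[i]]_n) (y : 'cV[R[i]]_n) :
  (block_mx c0%:M c (-b) D *m pairv 1 y) (lshift n ord0) 0 = c0 + (c *m y) 0 0.
Proof.
rewrite /pairv mul_block_col col_mxEu mulmx1 mxED; congr (_ + _).
by rewrite mxE mulr1n.
Qed.

Theorem mainTheorem16 (R : realType) (n : nat) (th : 'I_n.+1 -> R)
  (L : R -> (R -> R) -> R) (alpha : R) (lam d1 : R[i]) :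
  is_mesh th ->
  (forall a : R, bounded_linear_X (L a)) ->
  Dmat th - lam%:M \in unitmx ->
  Deltan th (L alpha) lam = 0 ->
  has_derivC (Deltan th (L alpha)) lam d1 ->
  d1 != 0 ->
  let D := Dmat th in
  let p : 'cV[R[i]]_(1 + n) :=
    pairv 1 (invmx (D - lam%:M) *m (D *m @ones R n)) in
  let q : 'cV[R[i]]_(1 + n) :=
    pairv (d1^-1)
      (d1^-1 *: (invmx (lam%:M - D^T) *m
                 \col_(j < n) (L alpha (fun t => (lagr th (lift ord0 j)).[t]))%:C)) in
  [/\ (An th (L alpha))^T *m q = lam *: q,
      dotv q p = 1,
      is_spectral_projection (An th (L alpha)) lam
        (fun v => (d1^-1 * (top v + Lc (L alpha)
                     (Pn_fun th (invmx (lam%:M - D) *m bot v)))) *: p),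
      (forall v : 'cV[R[i]]_(1 + n),
         (d1^-1 * (top v + Lc (L alpha) (Pn_fun th (invmx (lam%:M - D) *m bot v))))
           *: p = dotv q v *: p)
    & (L_differentiable L ->
       forall (A' : 'M[R[i]]_(1 + n)) (d2 : R[i]),
         has_derivM (fun a => An th (L a)) alpha A' ->
         has_derivRC (fun a => Deltan th (L a) lam) alpha d2 ->
         dotv q (A' *m p) = - (d1^-1 * d2))].
Proof.
move=> Hmesh HL HU HD Hd1 Hd0 D p q.
have HLa := HL alpha.
pose b := D *m ones R n.
pose c := crow th (L alpha).
pose c0 := cL th (L alpha) ord0.
have Hlam : lam = c0 + (c *m (invmx (D - lam%:M) *m b)) 0 0.
  by apply/eqP; rewrite -subr_eq0 -(DeltaE HLa) HD.
have Hd1' : d1 = 1 - (c *m (invmx (D - lam%:M) *m (invmx (D - lam%:M) *m b))) 0 0.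
  exact (@deriv_resolvent R n D b c c0 lam d1 (Deltan th (L alpha)) HU (fun z => DeltaE HLa n th z) Hd1).
have Ecol : \col_(j < n) (L alpha (fun t => (lagr th (lift ord0 j)).[t]))%:C = c^T.
  by apply/matrixP => i j; rewrite !mxE.
have AnE : An th (L alpha) = block_mx c0%:M c (-b) D := An_E HLa n th.
have LcE : forall v : 'cV[R[i]]_(1 + n),
    Lc (L alpha) (Pn_fun th (invmx (lam%:M - D) *m bot v)) =
    (c *m (invmx (lam%:M - D) *m bot v)) 0 0.
  by move=> v; exact: Lc_Pn.
have [H1 H2 H3 H4] := @alg_main R n D b c c0 lam d1 HU Hlam Hd1' Hd0.
split.
- by rewrite AnE /q Ecol; exact: H1.
- by rewrite /q Ecol; exact: H2.
- rewrite AnE (_ : (fun v => _) = (fun v =>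
     (d1^-1 * (top v + (c *m (invmx (lam%:M - D) *m bot v)) 0 0)) *: p)).
    exact: H3.
  by apply/funext => v; rewrite LcE.
- by move=> v; rewrite LcE /q Ecol; exact: H4.
move=> _ A' d2 HA Hd2.
pose r0 : 'I_(1 + n) := lshift n ord0.
have DelE : forall x, Deltan th (L x) lam =
    lam - \sum_(k < 1 + n) An th (L x) r0 k * p k 0.
  move=> x; rewrite (DeltaE (HL x)) An_E //.
  have <- : (Amat th (L x) *m p) r0 0 = \sum_(k < 1 + n) Amat th (L x) r0 k * p k 0.
    by rewrite mxE.
  by rewrite /Amat /r0 /p top_row.
have HS := derivRC_sum (index_enum 'I_(1 + n)) (fun k => p k 0)
   (fun k x => An th (L x) r0 k) alpha (fun k => A' r0 k) (fun k => HA r0 k).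
have HS' := derivRC_opp _ lam _ _ HS.
have Hd2' := derivRC_ext _ _ _ _ DelE Hd2.
have Ed2 := derivRC_uniq Hd2' HS'.
have Hbot : forall i j, A' (rshift 1 i) j = 0.
  move=> i j; apply: (derivRC_cst (fun x => An th (L x) (rshift 1 i) j) alpha);
    last exact: HA.
  move=> x.
  by rewrite !An_E // /Amat !block_mxEv !col_mxEd.
rewrite Ed2 mulrN opprK.
rewrite /dotv.
rewrite (@big_split_ord _ 0 +%R 1 n) /= big_ord1.
rewrite [X in _ + X]big1 ?addr0; last first.
  move=> i _; rewrite [(A' *m p) _ _]mxE big1 ?mulr0 // => k _; by rewrite Hbot mul0r.
rewrite [(A' *m p) _ _]mxE; congr (_ * _).
by rewrite /q /pairv col_mxEu mxE mulr1n.


Qed.
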